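(* Let $l$ be a positive integer such that for every $i\in\mathcal{V}$ there exist $l$ matrices in $\mathcal{M}$ (possibly repeated) whose product, in some order, has all entries of its column indexed by $i$ strictly positive, and let $w>0$ be the probability that $W_1=M_1M_2\cdots M_l$ is scrambling (i.e. $\lambda(W_1)<1$). Let $T_k=M_1M_2\cdots M_k$. Then there exist constants $\alpha,\beta$ with $0<\alpha<1$ and $0\le\beta<1$ such that for every $k\ge 8l/w$, with probability greater than $1-\alpha^k$, $\delta(T_k)\le\beta^k$.
   Context: Let $\mathcal{G}=(\mathcal{V},\mathcal{E})$ be a strongly connected directed graph with $\mathcal{V}=\{1,\dots,m\}$, with a self-loop $(i,i)\in\mathcal{E}$ at every node. Let $\mathcal{O}_i=\{j:(i,j)\in\mathcal{E}\}$ and $D_i=|\mathcal{O}_i|$. At each time step $k\ge1$ each link $(i,j)\in\mathcal{E}$ is reliable with probability $q_{ij}\in(0,1]$, independently across links and across time steps; let $X_k[i,j]=1$ if $(i,j)$ is reliable at step $k$ and $0$ otherwise. Let $n=m+|\mathcal{E}|$ and index rows/columns of $n\times n$ matrices by $\mathcal{V}\cup\mathcal{E}$. The random matrix $M_k$ is defined by: for $i\in\mathcal{V}$ and $(i,j)\in\mathcal{E}$, $M_k[i,j]=X_k[i,j]/D_i$ and $M_k[i,(i,j)]=(1-X_k[i,j])/D_i$, all other entries of row $i$ being $0$; for $(i,j)\in\mathcal{E}$, $M_k[(i,j),j]=X_k[i,j]$ and $M_k[(i,j),(i,j)]=1-X_k[i,j]$, all other entries of row $(i,j)$ being $0$. $\mathcal{M}$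 denotes the finite set of all $2^{|\mathcal{E}|}$ matrices obtainable this way. For a row stochastic matrix $A$: $\delta(A)=\max_j\max_{i_1,i_2}|A[i_1,j]-A[i_2,j]|$ and $\lambda(A)=1-\min_{i_1,i_2}\sum_j\min(A[i_1,j],A[i_2,j])$; $A$ is scrambling if $\lambda(A)<1$. *)

(* Defs.v *)
From mathcomp Require Import all_boot all_order all_algebra.
From mathcomp Require Import reals.
Set Implicit Arguments. Unset Strict Implicit. Unset Printing Implicit Defensive.
Import Order.TTheory GRing.Theory Num.Theory.
Local Open Scope ring_scope.

Definition edge (m : nat) (e : rel 'I_m) := {p : 'I_m * 'I_m | e p.1 p.2}.

(* Index set V ∪ E of rows/columns. *)
Definition idx (m : nat) (e : rel 'I_m) := ('I_m + edge e)%type.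
Definition nidx (m : nat) (e : rel 'I_m) := #|{: idx e}|.

Definition outdeg (m : nat) (e : rel 'I_m) (i : 'I_m) : nat := #|[set j | e i j]|.

(* A reliability pattern at one time step: X[i,j] for every link. *)
Definition pattern (m : nat) (e : rel 'I_m) := {ffun edge e -> bool}.

Definition b2R (R : realType) (b : bool) : R := if b then 1 else 0.

Definition Mentry (R : realType) (m : nat) (e : rel 'I_m) (X : pattern e)
  (a b : idx e) : R :=
  match a, b with
  | inl i, inl j =>
      match insub (i, j) with
      | Some p => b2R R (X p) / (outdeg e i)%:R
      | None => 0
      end
  | inl i, inr p => if (sval p).1 == i then (1 - b2R R (X p)) / (outdeg e i)%:R else 0
  | inr p, inl j => if (sval p).2 == j then b2R R (X p) else 0
  | inr p, inr p' => if p' == p then 1 - b2R R (X p) else 0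
  end.

Definition Mmat (R : realType) (m : nat) (e : rel 'I_m) (X : pattern e)
  : 'M[R]_(nidx e) :=
  \matrix_(a, b) Mentry R X (enum_val a) (enum_val b).

Definition sample (m : nat) (e : rel 'I_m) (k : nat) := {ffun 'I_k -> pattern e}.

Definition Tprod (R : realType) (m : nat) (e : rel 'I_m) (k : nat) (om : sample e k)
  : 'M[R]_(nidx e) :=
  foldr (fun t acc => Mmat R (om t) *m acc) 1%:M (enum 'I_k).

(* Probability weight of a sample: independent links, independent steps. *)
Definition weight (R : realType) (m : nat) (e : rel 'I_m) (q : edge e -> R)
  (k : nat) (om : sample e k) : R :=
  \prod_(t < k) \prod_(p : edge e) (if om t p then q p else 1 - q p).

Definition prob (R : realType) (m : nat) (e : rel 'I_m) (q : edge e -> R)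
  (k : nat) (P : pred (sample e k)) : R :=
  \sum_(om : sample e k | P om) weight q om.

Definition delta (R : realType) (n : nat) (A : 'M[R]_n) : R :=
  \big[Num.max/0]_(j < n) \big[Num.max/0]_(i1 < n) \big[Num.max/0]_(i2 < n)
     `|A i1 j - A i2 j|.

(* lambda(A) = 1 - min_{i1,i2} sum_j min(A[i1,j], A[i2,j]); for row-stochastic
   A each inner sum is in [0,1], so 1 is a neutral element for this min. *)
Definition lambda (R : realType) (n : nat) (A : 'M[R]_n) : R :=
  1 - \big[Num.min/1]_(i1 < n) \big[Num.min/1]_(i2 < n)
        \sum_(j < n) Num.min (A i1 j) (A i2 j).

Definition scrambling (R : realType) (n : nat) (A : 'M[R]_n) : bool := lambda A < 1.

(* Main.v *)
Require Import Defs.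
From mathcomp Require Import all_boot all_order all_algebra.
From mathcomp Require Import reals.
From mathcomp Require Import lra zify.
Set Implicit Arguments. Unset Strict Implicit. Unset Printing Implicit Defensive.
Import Order.TTheory GRing.Theory Num.Theory.
Local Open Scope ring_scope.

Section Gen.
Variable R : realType.

Lemma xle_bigmax (I : eqType) (r : seq I) (P : pred I) (F : I -> R) x0 i :
  i \in r -> P i -> F i <= \big[Num.max/x0]_(j <- r | P j) F j.
Proof.
elim: r => // a r IH; rewrite inE big_cons => /orP[/eqP<-|ir] Pi.
  by rewrite Pi le_max lexx.
case: ifP => _; last exact: IH.
by rewrite le_max (IH ir Pi) orbT.
Qed.

Lemma xbigmin_le (I : eqType) (r : seq I) (P : pred I) (F : I -> R) x0 i :
  i \in r -> P i -> \big[Num.min/x0]_(j <- r | P j) F j <= F i.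
Proof.
elim: r => // a r IH; rewrite inE big_cons => /orP[/eqP<-|ir] Pi.
  by rewrite Pi ge_min lexx.
case: ifP => _; last exact: IH.
by rewrite ge_min (IH ir Pi) orbT.
Qed.

Lemma xbigmin_le_idx (I : Type) (r : seq I) (P : pred I) (F : I -> R) x0 :
  \big[Num.min/x0]_(j <- r | P j) F j <= x0.
Proof.
elim: r => [|a r IH]; first by rewrite big_nil.
rewrite big_cons; case: ifP => _ //.
by rewrite ge_min IH orbT.
Qed.

Lemma xbigmax_ge_idx (I : Type) (r : seq I) (P : pred I) (F : I -> R) x0 :
  x0 <= \big[Num.max/x0]_(j <- r | P j) F j.
Proof.
elim: r => [|a r IH]; first by rewrite big_nil.
rewrite big_cons; case: ifP => _ //.
by rewrite le_max IH orbT.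
Qed.

Lemma xbigmax_le (I : Type) (r : seq I) (P : pred I) (F : I -> R) x0 t :
  x0 <= t -> (forall i, P i -> F i <= t) -> \big[Num.max/x0]_(j <- r | P j) F j <= t.
Proof.
move=> h0 hF; apply: (big_ind (fun x => x <= t)) => //.
by move=> x y hx hy; rewrite ge_max hx hy.
Qed.

Lemma xbigmax_lt (I : Type) (r : seq I) (P : pred I) (F : I -> R) x0 t :
  x0 < t -> (forall i, P i -> F i < t) -> \big[Num.max/x0]_(j <- r | P j) F j < t.
Proof.
move=> h0 hF; apply: (big_ind (fun x => x < t)) => //.
by move=> x y hx hy; rewrite gt_max hx hy.
Qed.

Lemma xle_bigmin (I : Type) (r : seq I) (P : pred I) (F : I -> R) x0 t :
  t <= x0 -> (forall i, P i -> t <= F i) -> t <= \big[Num.min/x0]_(j <- r | P j) F j.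
Proof.
move=> h0 hF; apply: (big_ind (fun x => t <= x)) => //.
by move=> x y hx hy; rewrite le_min hx hy.
Qed.

Variable n : nat.

Definition stoch (A : 'M[R]_n) :=
  (forall i j, 0 <= A i j) /\ (forall i, \sum_j A i j = 1).

Lemma delta_ge0 (A : 'M[R]_n) : 0 <= delta A.
Proof. exact: xbigmax_ge_idx. Qed.

Lemma delta_ge (A : 'M[R]_n) i1 i2 j : `|A i1 j - A i2 j| <= delta A.
Proof.
rewrite /delta.
apply: le_trans (xle_bigmax _ _ (mem_index_enum j) (erefl true)).
apply: le_trans (xle_bigmax _ _ (mem_index_enum i1) (erefl true)).
exact: (xle_bigmax _ _ (mem_index_enum i2) (erefl true)).
Qed.

Lemma delta_le (A : 'M[R]_n) t : 0 <= t ->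
  (forall i1 i2 j, `|A i1 j - A i2 j| <= t) -> delta A <= t.
Proof.
move=> t0 h; apply: xbigmax_le => // j _; apply: xbigmax_le => // i1 _.
by apply: xbigmax_le => // i2 _.
Qed.

Lemma lambda_ge0 (A : 'M[R]_n) : 0 <= lambda A.
Proof. by rewrite /lambda subr_ge0 xbigmin_le_idx. Qed.

Lemma lambda_le1 (A : 'M[R]_n) : (forall i j, 0 <= A i j) -> lambda A <= 1.
Proof.
move=> h; rewrite /lambda lerBlDr lerDl.
apply: xle_bigmin => // i1 _; apply: xle_bigmin => // i2 _.
by apply: sumr_ge0 => j _; rewrite le_min !h.
Qed.

Lemma lambda_ge (A : 'M[R]_n) i1 i2 :
  1 - \sum_j Num.min (A i1 j) (A i2 j) <= lambda A.
Proof.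
rewrite /lambda lerB //.
apply: le_trans (xbigmin_le _ _ (mem_index_enum i1) (erefl true)) _.
exact: (xbigmin_le _ _ (mem_index_enum i2) (erefl true)).
Qed.

Lemma stochM (A B : 'M[R]_n) : stoch A -> stoch B -> stoch (A *m B).
Proof.
move=> [A0 A1] [B0 B1]; split=> [i j|i].
  by rewrite mxE; apply: sumr_ge0 => k _; rewrite mulr_ge0.
under eq_bigr do rewrite mxE.
rewrite exchange_big /= -(A1 i); apply: eq_bigr => k _.
by rewrite -mulr_sumr B1 mulr1.
Qed.

Lemma stoch1 : stoch 1%:M.
Proof.
split=> [i j|i]; first by rewrite mxE ler0n.
rewrite (bigD1 i) //= big1 ?addr0 ?mxE ?eqxx //.
by move=> j /negbTE; rewrite mxE eq_sym => ->.
Qed.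

Lemma key (A B : 'M[R]_n) : stoch A -> delta (A *m B) <= lambda A * delta B.
Proof.
move=> [A0 A1]; apply: delta_le => [|i1 i2 j].
  by rewrite mulr_ge0 ?lambda_ge0 ?delta_ge0.
set mn := fun k => Num.min (A i1 k) (A i2 k).
set s := \sum_k (A i1 k - mn k).
have hs1 : s = 1 - \sum_k mn k by rewrite /s sumrB A1.
have hs2 : \sum_k (A i2 k - mn k) = s by rewrite sumrB A1 hs1.
have ha k : 0 <= A i1 k - mn k by rewrite subr_ge0 ge_min lexx.
have hb k : 0 <= A i2 k - mn k by rewrite subr_ge0 ge_min lexx orbT.
set L := \big[Num.min/B i1 j]_k B k j.
set U := \big[Num.max/B i1 j]_k B k j.
have hL k : L <= B k j by exact: (xbigmin_le _ _ (mem_index_enum k) (erefl true)).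
have hU k : B k j <= U by exact: (xle_bigmax _ _ (mem_index_enum k) (erefl true)).
have hUL : U - L <= delta B.
  have hd k k' : B k j - delta B <= B k' j.
    have := delta_ge B k k' j; have := ler_norm (B k j - B k' j); lra.
  rewrite lerBlDr; apply: xbigmax_le => [|k _]; rewrite -lerBlDl;
    by apply: xle_bigmin => [|k' _]; apply: hd.
have hdiff : (A *m B) i1 j - (A *m B) i2 j =
    \sum_k (A i1 k - mn k) * B k j - \sum_k (A i2 k - mn k) * B k j.
  rewrite !mxE; under [X in _ = X - _]eq_bigr do rewrite mulrBl.
  under [X in _ = _ - X]eq_bigr do rewrite mulrBl.
  rewrite !sumrB; lra.
have sa1 : \sum_k (A i1 k - mn k) * B k j <= s * U.
  rewrite /s mulr_suml; apply: ler_sum => k _; exact: ler_wpM2l.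
have sa2 : s * L <= \sum_k (A i1 k - mn k) * B k j.
  rewrite /s mulr_suml; apply: ler_sum => k _; exact: ler_wpM2l.
have sb1 : \sum_k (A i2 k - mn k) * B k j <= s * U.
  rewrite -hs2 mulr_suml; apply: ler_sum => k _; exact: ler_wpM2l.
have sb2 : s * L <= \sum_k (A i2 k - mn k) * B k j.
  rewrite -hs2 mulr_suml; apply: ler_sum => k _; exact: ler_wpM2l.
have s0 : 0 <= s by apply: sumr_ge0.
have sl : s <= lambda A by rewrite hs1 lambda_ge.
have h1 : s * (U - L) <= lambda A * delta B.
  apply: ler_pM => //; by rewrite subr_ge0 (le_trans (hL i1) (hU i1)).
rewrite hdiff ler_norml; apply/andP; split; rewrite mulrBr in h1; lra.
Qed.

End Gen.

Section Spec.
Variable R : realType.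
Variables (m : nat) (e : rel 'I_m).

Lemma core (i : 'I_m) (G : edge e -> R) :
 \sum_(j : 'I_m) (match insub (i, j) with Some p => G p | None => 0 end)
 = \sum_(p : edge e) (if (sval p).1 == i then G p else 0).
Proof.
rewrite (eq_bigr (fun p => \sum_(j : 'I_m) (if j == (sval p).2 then
   (if (sval p).1 == i then G p else 0) else 0))); last first.
  by move=> p _; rewrite -big_mkcond big_pred1_eq.
rewrite exchange_big /=; apply: eq_bigr => j _.
case: insubP => [p0 hij hval | hn].
  have hv : sval p0 = (i, j) by exact: hval.
  rewrite (bigD1 p0) //= hv !eqxx big1 ?addr0 // => p hp.
  case: eqP => // hj; case: eqP => // hi; case/eqP: hp; apply: val_inj.
  by rewrite /= hv; case: (sval p) hj hi => a b /= -> ->.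
symmetry; apply: big1 => p _; case: eqP => // hj; case: eqP => // hi.
by move: hn; rewrite /= hj -hi; case: p {hj hi} => [[a b] /= hab]; rewrite hab.
Qed.

Lemma Mmat_stoch (X : pattern e) : (forall i, e i i) -> stoch (Mmat R X).
Proof.
move=> hloop.
have hD i : (0 < outdeg e i)%N.
  by apply/card_gt0P; exists i; rewrite inE hloop.
have hb b : 0 <= b2R R b <= 1 by case: b => /=; rewrite ?ler01 ?lexx.
split=> [a b|a].
  rewrite mxE; case: (enum_val a) => [i|p]; case: (enum_val b) => [j|p'] /=.
  - case: insub => [p|//]; apply: divr_ge0 => //; by case/andP: (hb (X p)).
  - case: ifP => _ //; apply: divr_ge0 => //; case/andP: (hb (X p')); lra.
  - case: ifP => _ //; by case/andP: (hb (X p)).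
  - case: ifP => _ //; case/andP: (hb (X p)); lra.
under eq_bigr do rewrite mxE.
rewrite -(big_enum_val (fun y => Mentry R X (enum_val a) y)).
rewrite (eq_bigl (fun _ => true)) //= big_sumType /=.
case: (enum_val a) => [i|p] /=.
  have D0 : (outdeg e i)%:R != 0 :> R by rewrite pnatr_eq0 -lt0n hD.
  rewrite (core i (fun p => b2R R (X p) / (outdeg e i)%:R)) -big_split /=.
  rewrite (eq_bigr (fun p : edge e => if (sval p).1 == i then 1 / (outdeg e i)%:R else 0)); last first.
    by move=> p _; case: ifP => _; rewrite ?addr0 // -mulrDl addrC subrK.
  rewrite -(core i (fun _ => 1 / (outdeg e i)%:R)).
  rewrite (eq_bigr (fun j => if e i j then 1 / (outdeg e i)%:R else 0)); last first.
    by move=> j _; case: insubP => [p0 hp _ | hn] /=; [move: hp => /= -> | move: hn => /= /negbTE ->].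
  rewrite -big_mkcond sumr_const.
  have -> : #|[pred j | e i j]| = outdeg e i.
    by rewrite /outdeg; apply: eq_card => j; rewrite !inE.
  by rewrite div1r -[LHS]mulr_natr mulVf.
rewrite (eq_bigr (fun j => if j == (sval p).2 then b2R R (X p) else 0)); last first.
  by move=> j _; rewrite eq_sym.
by rewrite -!big_mkcond !big_pred1_eq addrC subrK.
Qed.
End Spec.

Section Prob.
Variable R : realType.
Variables (m : nat) (e : rel 'I_m) (q : edge e -> R).
Hypothesis hq : forall p : edge e, 0 < q p <= 1.
Hypothesis hloop : forall i : 'I_m, e i i.

Definition join a b (x : sample e a) (y : sample e b) : sample e (a + b) :=
  [ffun t => match split t with inl i => x i | inr j => y j end].

Lemma joinL a b (x : sample e a) (y : sample e b) t : join x y (lshift b t) = x t.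
Proof. by rewrite ffunE (unsplitK (inl t) : split (lshift b t) = inl t). Qed.
Lemma joinR a b (x : sample e a) (y : sample e b) t : join x y (rshift a t) = y t.
Proof. by rewrite ffunE (unsplitK (inr t) : split (rshift a t) = inr t). Qed.

Lemma sum_join a b (F : sample e (a + b) -> R) :
  \sum_(om : sample e (a + b)) F om =
  \sum_(x : sample e a) \sum_(y : sample e b) F (join x y).
Proof.
rewrite pair_bigA /=.
rewrite (reindex (fun p : sample e a * sample e b => join p.1 p.2)) //.
exists (fun om : sample e (a + b) =>
   ([ffun t => om (lshift b t)], [ffun t => om (rshift a t)])).
  move=> [x y] _ /=; congr pair; apply/ffunP => t; by rewrite ffunE ?joinL ?joinR.
move=> om _; apply/ffunP => t /=.
by case: (split_ordP t) => j ->; rewrite ?joinL ?joinR ffunE.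
Qed.

Lemma weight_join a b (x : sample e a) (y : sample e b) :
  weight q (join x y) = weight q x * weight q y.
Proof.
rewrite /weight big_split_ord /=; congr (_ * _); apply: eq_bigr => t _;
  by rewrite ?joinL ?joinR.
Qed.

Lemma weight_ge0 k (om : sample e k) : 0 <= weight q om.
Proof.
apply: prodr_ge0 => t _; apply: prodr_ge0 => p _.
by case: (om t p); case/andP: (hq p) => h1 h2; lra.
Qed.

Lemma weight_sum k : \sum_(om : sample e k) weight q om = 1.
Proof.
rewrite /weight -(bigA_distr_bigA (fun (t : 'I_k) (X : pattern e) =>
   \prod_(p : edge e) (if X p then q p else 1 - q p))).
apply: big1 => t _.
rewrite -(bigA_distr_bigA (fun (p : edge e) (b : bool) => if b then q p else 1 - q p)).
by apply: big1 => p _; rewrite big_bool /= addrC subrK.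
Qed.

Lemma foldr_mul n (I : Type) (f : I -> 'M[R]_n) s (B : 'M[R]_n) :
  foldr (fun t acc => f t *m acc) B s = foldr (fun t acc => f t *m acc) (1%:M : 'M[R]_n) s *m B.
Proof. by elim: s => [|a s IH] /=; [rewrite mul1mx | rewrite IH mulmxA]. Qed.

Lemma foldr_ext (I T : Type) (f g : I -> T -> T) z s :
  (forall t acc, f t acc = g t acc) -> foldr f z s = foldr g z s.
Proof. by move=> h; elim: s => //= a s ->. Qed.

Lemma enum_split a b :
  enum 'I_(a + b) = map (@lshift a b) (enum 'I_a) ++ map (@rshift a b) (enum 'I_b).
Proof.
apply: (inj_map val_inj); rewrite map_cat fintype.val_enum_ord.
have -> : map val (map (@lshift a b) (enum 'I_a)) = iota 0 a.
  by rewrite -fintype.val_enum_ord; elim: (enum 'I_a) => //= ? ? ->.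
have -> : map val (map (@rshift a b) (enum 'I_b)) = iota a b.
  have -> : iota a b = map (addn a) (iota 0 b) by rewrite -iotaDl addn0.
  by rewrite -fintype.val_enum_ord; elim: (enum 'I_b) => //= ? ? ->.
by rewrite iotaD.
Qed.

Lemma Tprod_join a b (x : sample e a) (y : sample e b) :
  Tprod R (join x y) = Tprod R x *m Tprod R y.
Proof.
rewrite /Tprod enum_split foldr_cat !foldr_map foldr_mul.
congr (_ *m _); apply: foldr_ext => t acc; by rewrite ?joinL ?joinR.
Qed.

Lemma Tprod_stoch k (om : sample e k) : stoch (Tprod R om).
Proof.
rewrite /Tprod; elim: (enum 'I_k) => [|a s IH] /=; first exact: stoch1.
by apply: stochM IH; apply: Mmat_stoch.
Qed.

Definition E k := \sum_(om : sample e k) weight q om * delta (Tprod R om).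
Definition rho l := \sum_(x : sample e l) weight q x * lambda (Tprod R x).

Lemma rho_ge0 l : 0 <= rho l.
Proof. by apply: sumr_ge0 => x _; rewrite mulr_ge0 ?weight_ge0 ?lambda_ge0. Qed.

Lemma E_step a k : E (a + k) <= rho a * E k.
Proof.
rewrite /E /rho sum_join mulr_suml; apply: ler_sum => x _.
rewrite mulr_sumr; apply: ler_sum => y _.
rewrite weight_join Tprod_join.
have hk := @key R _ (Tprod R x) (Tprod R y) (Tprod_stoch x).
by rewrite mulrACA; apply: ler_wpM2l => //; rewrite mulr_ge0 ?weight_ge0.
Qed.

Lemma E_le1 k : E k <= 1.
Proof.
rewrite -(weight_sum k) /E; apply: ler_sum => om _.
rewrite -[X in _ <= X]mulr1; apply: ler_wpM2l; first exact: weight_ge0.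
have := @key R _ (Tprod R om) 1%:M (Tprod_stoch om); rewrite mulmx1 => h.
apply: le_trans h _; rewrite -[1]mulr1; apply: ler_pM.
- exact: lambda_ge0.
- exact: delta_ge0.
- by apply: lambda_le1; case: (Tprod_stoch om).
apply: delta_le => // i1 i2 j; rewrite !mxE.
rewrite mul1r; by case: (i1 == j); case: (i2 == j); rewrite /= ?mulr1n ?mulr0n ?subrr ?normr0 ?subr0 ?sub0r ?normrN ?normr1 ?ler01 ?lexx.
Qed.

Lemma E_N l N r : E (N * l + r) <= rho l ^+ N.
Proof.
elim: N => [|N IH]; first by rewrite mul0n add0n expr0 E_le1.
rewrite (_ : (N.+1 * l + r = l + (N * l + r))%N); last by rewrite mulSn addnA.
apply: le_trans (E_step _ _) _; rewrite exprS; apply: ler_wpM2l => //.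
exact: rho_ge0.
Qed.

Lemma arith (P r l k : nat) : (8 * l <= k)%N -> k = (P + r)%N -> (r < l)%N -> (2 * k < 4 * P)%N.
Proof. lia. Qed.

Lemma bern (n : nat) (x : R) : 0 <= x <= 1 -> 1 - n%:R * x <= (1 - x) ^+ n.
Proof.
move=> /andP[x0 x1]; elim: n => [|n IH]; first by rewrite mul0r subr0 expr0.
rewrite exprSr; apply: le_trans (_ : (1 - n%:R * x) * (1 - x) <= _).
  have n0 : 0 <= n%:R :> R by rewrite ler0n.
  rewrite -natr1; nra.
by apply: ler_wpM2r => //; lra.
Qed.

Lemma main (l : nat) (hl : (0 < l)%N)
  (hw : 0 < prob q (fun om : sample e l => scrambling (Tprod R om))) :
  let w := prob q (fun om : sample e l => scrambling (Tprod R om)) in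
  exists alpha beta : R,
    [/\ 0 < alpha < 1, 0 <= beta < 1 &
      forall k : nat, 8 * l%:R / w <= k%:R ->
        1 - alpha ^+ k < prob q (fun om : sample e k => delta (Tprod R om) <= beta ^+ k)].
Proof.
move=> w.
have wtot : w + \sum_(x : sample e l | ~~ scrambling (Tprod R x)) weight q x = 1.
  by rewrite /w /prob -(weight_sum l) [in RHS](bigID (fun x : sample e l => scrambling (Tprod R x))) /=.
have w1 : w <= 1.
  rewrite -wtot lerDl; apply: sumr_ge0 => x _; exact: weight_ge0.
pose lmax := \big[Num.max/0]_(x : sample e l | scrambling (Tprod R x)) lambda (Tprod R x).
have lm1 : lmax < 1 by apply: xbigmax_lt => // x hx.
have lm0 : 0 <= lmax by apply: xbigmax_ge_idx.
have rle : rho l <= lmax * w + (1 - w).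
  rewrite /rho (bigID (fun x : sample e l => scrambling (Tprod R x))) /=.
  apply: lerD.
    apply: le_trans (_ : \sum_(x | scrambling (Tprod R x)) weight q x * lmax <= _).
      apply: ler_sum => x hx; apply: ler_wpM2l; first exact: weight_ge0.
      have := @xle_bigmax R _ (index_enum _) (fun x => scrambling (Tprod R x)) (fun x => lambda (Tprod R x)) 0 x (mem_index_enum x) hx. exact.
    by rewrite -(mulr_suml _ (fun x => scrambling (Tprod R x))) mulrC.
  rewrite -wtot addrC addKr; apply: ler_sum => x _.
  rewrite -[X in _ <= X]mulr1; apply: ler_wpM2l; first exact: weight_ge0.
  by apply: lambda_le1; case: (Tprod_stoch x).
have r0 := rho_ge0 l.
have hw0 : 0 < w := hw.
have hp : 0 < (1 - lmax) * w by apply: mulr_gt0; lra.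
have r1 : rho l < 1 by move: hp; rewrite mulrBl mul1r; lra.
set rh := rho l in rle r0 r1.
have l4 : 4 <= (4 * l)%:R :> R by rewrite natrM ler_peMr ?ler1n //; lia.
pose x := (1 - rh) / (4 * l)%:R.
have xL : x * (4 * l)%:R = 1 - rh by rewrite /x divfK // pnatr_eq0; lia.
have x0 : 0 < x by apply: divr_gt0; lra.
have x1 : x <= 1 / 4.
  have : 4 * x <= x * (4 * l)%:R by rewrite mulrC ler_wpM2l // ltW.
  lra.
pose g := 1 - x.
have g0 : 0 < g by rewrite /g; lra.
have g1 : g < 1 by rewrite /g; lra.
have grh : rh <= g ^+ (4 * l).
  have hb : 1 - (4 * l)%:R * x <= (1 - x) ^+ (4 * l) by apply: bern; apply/andP; split; lra.
  rewrite mulrC xL in hb; rewrite /g; lra.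
exists g, g; split; [by rewrite g0 g1 | by rewrite ltW // g1 |].
move=> k hk.
have k8 : (8 * l <= k)%N.
  rewrite -(ler_nat R) natrM; apply: le_trans hk.
  rewrite ler_pdivlMr // ler_piMr //; rewrite mulr_ge0 // ler0n.
set N := (k %/ l)%N; set r := (k %% l)%N.
have kNr : k = (N * l + r)%N by exact: divn_eq.
have rl : (r < l)%N by exact: ltn_pmod.
have k2 : (2 * k < 4 * l * N)%N.
  rewrite -mulnA (mulnC l N); exact: arith k8 kNr rl.
have EN := E_N l N r; rewrite -kNr in EN.
have EN2 : E k < g ^+ k * g ^+ k.
  apply: le_lt_trans EN _; apply: le_lt_trans (_ : g ^+ (4 * l * N) < _).
    rewrite exprM; apply: lerXn2r => //; rewrite nnegrE //; lra.
  rewrite -exprD addnn -mul2n -(subnK (ltnW k2)) exprD.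
  rewrite -[X in _ < X]mul1r ltr_pM2r ?exprn_gt0 //.
  by rewrite exprn_ilt1 ?subn_eq0 -?ltnNge ?k2 //; lra.
pose bad := \sum_(om : sample e k | ~~ (delta (Tprod R om) <= g ^+ k)) weight q om.
have hbad : g ^+ k * bad <= E k.
  rewrite /bad mulr_sumr /E [X in _ <= X](bigID (fun om : sample e k => ~~ (delta (Tprod R om) <= g ^+ k))) /=.
  rewrite -[X in X <= _]addr0; apply: lerD.
    apply: ler_sum => om hom; rewrite mulrC; apply: ler_wpM2l; first exact: weight_ge0.
    by move: hom; rewrite -ltNge => /ltW.
  by apply: sumr_ge0 => om _; rewrite mulr_ge0 ?weight_ge0 ?delta_ge0.
have gk : 0 < g ^+ k by rewrite exprn_gt0.
have bk : bad < g ^+ k.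
  by rewrite -(ltr_pM2l gk); apply: le_lt_trans hbad EN2.
have : prob q (fun om : sample e k => delta (Tprod R om) <= g ^+ k) + bad = 1.
  by rewrite /prob /bad -(weight_sum k) [in RHS](bigID (fun om : sample e k => delta (Tprod R om) <= g ^+ k)) /=.
lra.
Qed.


End Prob.

Theorem lemma2 (R : realType) (m : nat) (e : rel 'I_m) (q : edge e -> R) (l : nat)
  (hm : (0 < m)%N)
  (hloop : forall i : 'I_m, e i i)
  (hconn : forall i j : 'I_m, connect e i j)
  (hq : forall p : edge e, 0 < q p <= 1)
  (hl : (0 < l)%N)
  (hcol : forall i : 'I_m, exists om : sample e l,
      forall a : 'I_(nidx e), 0 < Tprod R om a (enum_rank (inl i : idx e)))
  (hw : 0 < prob q (fun om : sample e l => scrambling (Tprod R om))) :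
  let w := prob q (fun om : sample e l => scrambling (Tprod R om)) in
  exists alpha beta : R,
    [/\ 0 < alpha < 1, 0 <= beta < 1 &
      forall k : nat, 8 * l%:R / w <= k%:R ->
        1 - alpha ^+ k < prob q (fun om : sample e k => delta (Tprod R om) <= beta ^+ k)].
Proof.
exact: (@main R m e q hq hloop l hl hw).
Qed.
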